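(* Let $\Gamma$ be the subgroup of $\Gamma^6$ generated by $A$ and $\mathrm{H}$. Then $\mathrm{H}$ is normal in $\Gamma$, and the quotient group $\Gamma/\mathrm{H}$ is cyclic of order $8$, generated by the coset $\mathrm{H}A$.
   Context: Let $\langle x,y\rangle=x_1y_1+\dots+x_6y_6-x_7y_7$ on $\mathbb{R}^7$, $H^6=\{x:\langle x,x\rangle=-1,x_7>0\}$, and $e_1,\dots,e_7$ the standard basis. $\Gamma^6=PO_{6,1}\mathbb{Z}$ is the group of $7\times7$ integer matrices preserving $\langle\cdot,\cdot\rangle$ and mapping $H^6$ to itself. $\mathrm{K}^6$ is the group of the $64$ matrices $\mathrm{diag}(\varepsilon_1,\dots,\varepsilon_6,1)$, $\varepsilon_i=\pm1$. Define vectors $u_1,\dots,u_{27}$: $u_i=-e_i$ for $1\le i\le 6$; $u_7,\dots,u_{21}$ are $e_a+e_b+e_7$ for the pairs $(a,b)=(1,2),(1,3),(2,3),(1,4),(2,4),(3,4),(1,5),(2,5),(3,5),(4,5),(1,6),(2,6),(3,6),(4,6),(5,6)$ in this order; $u_{22},\dots,u_{27}$ are $\sum_{i=1}^6e_i-e_c+2e_7$ for $c=6,5,4,3,2,1$ in this order. Let $R_j$ be the reflection $x\mapsto x-2\langle x,u_j\rangle u_j$. For $7\le j\le27$ let $k_j\in\mathrm{K}^6$ be the matrix with $\varepsilon_i=-1$ exactly for $i\in N_j$, where $N_7=\{2,3,5\}$, $N_8=\{1,2,3,4,5\}$, $N_9=\{3,4,5\}$, $N_{10}=\{1,2,3,5,6\}$,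 $N_{11}=\{1,4,6\}$, $N_{12}=\{2,3,5\}$, $N_{13}=\{3,4,5\}$, $N_{14}=\{1,2,5\}$, $N_{15}=\{5\}$, $N_{16}=\{2,4,6\}$, $N_{17}=\{1,2,5\}$, $N_{18}=\{2,4,6\}$, $N_{19}=\{6\}$, $N_{20}=\{1,3,4\}$, $N_{21}=\{1,2,3,5,6\}$, $N_{22}=\{1,3,4\}$, $N_{23}=\{2\}$, $N_{24}=\{1,4,6\}$, $N_{25}=\{1,2,3,4,5\}$, $N_{26}=\{4\}$, $N_{27}=\{3\}$. Let $\mathrm{H}$ be the subgroup of $\Gamma^6$ generated by all matrices $\ell R_j\ell k_j$ with $\ell\in\mathrm{K}^6$ and $7\le j\le 27$. Let $A=\begin{pmatrix}1&0&0&0&0&0&0\\0&1&0&0&1&0&-1\\0&0&0&0&0&1&0\\0&-1&0&-1&0&0&1\\0&0&1&0&0&0&0\\0&0&0&-1&-1&0&1\\0&-1&0&-1&-1&0&2\end{pmatrix}.$ *)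

(* Defs.v *)
(* 7x7 integer matrices, indices 1..7 of the paper are ordinals 0..6. *)
From mathcomp Require Import all_boot all_order all_algebra.
Set Implicit Arguments. Unset Strict Implicit. Unset Printing Implicit Defensive.
Import Order.TTheory GRing.Theory Num.Theory.
Local Open Scope ring_scope.

Notation mat7 := 'M[int]_7.

Definition evec (i : nat) : 'cV[int]_7 := \col_(k < 7) ((k.+1 == i)%N)%:R.

(* Lorentzian form matrix J = diag(1,...,1,-1); <x,y> = x^T J y *)
Definition Jmat : mat7 := \matrix_(i < 7, j < 7) (if i == j then (if (i.+1 == 7)%N then -1 else 1) else 0).

Definition pairs_ab : seq (nat * nat) :=
  [:: (1,2); (1,3); (2,3); (1,4); (2,4); (3,4); (1,5); (2,5); (3,5); (4,5);
      (1,6); (2,6); (3,6); (4,6); (5,6)].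
Definition list_c : seq nat := [:: 6; 5; 4; 3; 2; 1].

Definition u (j : nat) : 'cV[int]_7 :=
  if (1 <= j <= 6)%N then - evec j
  else if (7 <= j <= 21)%N then
    let ab := nth (0,0)%N pairs_ab (j - 7) in evec ab.1 + evec ab.2 + evec 7
  else if (22 <= j <= 27)%N then
    let c := nth 0%N list_c (j - 22) in
    \sum_(1 <= i < 7) evec i - evec c + 2%:R *: evec 7
  else 0.

(* reflection R_j : x |-> x - 2 <x,u_j> u_j, as a matrix: 1 - 2 u_j u_j^T J *)
Definition R (j : nat) : mat7 := 1%:M - 2%:R *: (u j *m ((u j)^T *m Jmat)).

Definition Kmat (N : seq nat) : mat7 :=
  \matrix_(i < 7, j < 7) (if i == j then (if (i.+1 \in N) then -1 else 1) else 0).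

Definition Kof (s : {ffun 'I_6 -> bool}) : mat7 :=
  \matrix_(i < 7, j < 7)
    (if i == j then (if (i < 6)%N && s (inord i) then -1 else 1) else 0).

Definition Nset (j : nat) : seq nat :=
  nth [::] [:: [:: 2; 3; 5]; [:: 1; 2; 3; 4; 5]; [:: 3; 4; 5]; [:: 1; 2; 3; 5; 6];
    [:: 1; 4; 6]; [:: 2; 3; 5]; [:: 3; 4; 5]; [:: 1; 2; 5]; [:: 5]; [:: 2; 4; 6];
    [:: 1; 2; 5]; [:: 2; 4; 6]; [:: 6]; [:: 1; 3; 4]; [:: 1; 2; 3; 5; 6];
    [:: 1; 3; 4]; [:: 2]; [:: 1; 4; 6]; [:: 1; 2; 3; 4; 5]; [:: 4]; [:: 3]]%N (j - 7).

Definition kmat (j : nat) : mat7 := Kmat (Nset j).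

Inductive gen (S : mat7 -> Prop) : mat7 -> Prop :=
  | gen1 : gen S 1
  | genM g s : gen S g -> S s -> gen S (g * s)
  | genV g s : gen S g -> S s -> gen S (g * s^-1).

Definition Hgens (M : mat7) : Prop :=
  exists (s : {ffun 'I_6 -> bool}) (j : nat),
    (7 <= j <= 27)%N /\ M = Kof s * R j * Kof s * kmat j.

Definition Hgrp : mat7 -> Prop := gen Hgens.

Definition Amat : mat7 :=
  \matrix_(i < 7, j < 7) nth 0 (nth [::] [::
    [:: 1; 0; 0; 0; 0; 0; 0];
    [:: 0; 1; 0; 0; 1; 0; -1];
    [:: 0; 0; 0; 0; 0; 1; 0];
    [:: 0; -1; 0; -1; 0; 0; 1];
    [:: 0; 0; 1; 0; 0; 0; 0];
    [:: 0; 0; 0; -1; -1; 0; 1];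
    [:: 0; -1; 0; -1; -1; 0; 2]] i) j.

Definition Gamma : mat7 -> Prop := gen (fun M => M = Amat \/ Hgrp M).

Definition normal_in (N G : mat7 -> Prop) : Prop :=
  forall g h, G g -> N h -> N (g * h * g^-1).

Definition quotient_cyclic_gen (G N : mat7 -> Prop) (a : mat7) (n : nat) : Prop :=
  (forall g, G g -> exists k : nat, N (g * (a ^+ k)^-1)) /\
  (forall k : nat, N (a ^+ k) <-> (n %| k)%N).

(* Main.v *)
Require Import Defs.
From mathcomp Require Import all_boot all_order all_algebra.
Set Implicit Arguments. Unset Strict Implicit. Unset Printing Implicit Defensive.
Import Order.TTheory GRing.Theory Num.Theory.
Local Open Scope ring_scope.

Definition ent (l : seq (seq int)) (i j : nat) : int := nth 0 (nth [::] l i) j.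
Definition lsum (f : nat -> int) : int := foldr (fun k acc => f k + acc) 0 (iota 0 7).
Definition mk (f : nat -> nat -> int) : seq (seq int) := mkseq (fun i => mkseq (f i) 7) 7.
Definition lmul a b := mk (fun i j => lsum (fun k => ent a i k * ent b k j)).
Definition Il := mk (fun i j => (i == j)%:R).
Definition Jd (i j : nat) : int := if i == j then (if (i.+1 == 7)%N then -1 else 1) else 0.
Definition ul (j : nat) : seq int :=
  if (7 <= j <= 21)%N then
    let ab := nth (0,0)%N pairs_ab (j - 7) in
    mkseq (fun k => ((k.+1 == ab.1)%:R + (k.+1 == ab.2)%:R + (k.+1 == 7)%N%:R) : int) 7
  else let c := nth 0%N list_c (j - 22) in
    mkseq (fun k => ((k.+1 < 7)%N%:R - (k.+1 == c)%:R + 2%:R * (k.+1 == 7)%N%:R) : int) 7.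
Definition Rl (j : nat) : seq (seq int) :=
  mk (fun i k => (i == k)%:R - 2%:R * (nth 0 (ul j) i * lsum (fun m => nth 0 (ul j) m * Jd m k))).
Definition Kll (f : nat -> bool) := mk (fun i k => if i == k then (if f i then -1 else 1) else 0).
Definition Kl (bs : seq bool) := Kll (fun i => (i < 6)%N && nth false bs i).
Definition kl (j : nat) := Kll (fun i => i.+1 \in Nset j).
Definition hl bs j := lmul (lmul (lmul (Kl bs) (Rl j)) (Kl bs)) (kl j).
Definition Al : seq (seq int) := [::
    [:: 1; 0; 0; 0; 0; 0; 0];
    [:: 0; 1; 0; 0; 1; 0; -1];
    [:: 0; 0; 0; 0; 0; 1; 0];
    [:: 0; -1; 0; -1; 0; 0; 1];
    [:: 0; 0; 1; 0; 0; 0; 0];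
    [:: 0; 0; 0; -1; -1; 0; 1];
    [:: 0; -1; 0; -1; -1; 0; 2]].
(* inverse A^-1 = J A^T J *)
Definition trl a := mk (fun i j => ent a j i).
Definition Jl := mk Jd.
Definition Ail := lmul (lmul Jl (trl Al)) Jl.

Fixpoint allbs (n : nat) : seq (seq bool) :=
  if n is n'.+1 then [seq b :: s | b <- [:: false; true], s <- allbs n'] else [:: [::]].
Definition js := iota 7 21.
Definition canon (bs : seq bool) j := all (fun i => (nth 0 (ul j) i != 0) || ~~ nth false bs i) (iota 0 6).
Definition sides : seq (seq bool * nat) :=
  [seq p <- [seq (bs, j) | bs <- allbs 6, j <- js] | canon p.1 p.2].
Definition sidev (bs : seq bool) j (k : nat) : int :=
  (if (k < 6)%N && nth false bs k then -1 else 1) * nth 0 (ul j) k.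
Definition ipcol (g : seq (seq int)) bs j : int := lsum (fun k => ent g k 6 * Jd k k * sidev bs j k).

Fixpoint redH (n : nat) (g : seq (seq int)) : bool :=
  if n is n'.+1 then
    match [seq p <- sides | 0 < ipcol g p.1 p.2] with
    | [::] => g == Il
    | p :: _ =>
       let g' := lmul (lmul (lmul (lmul (kl p.2) (Kl p.1)) (Rl p.2)) (Kl p.1)) g in
       (lmul (hl p.1 p.2) g' == g) && redH n' g'
    end
  else g == Il.

Definition mkdata (p : seq bool * nat) :=
  let bs := p.1 in let j := p.2 in
  (bs, j, mkseq (fun k => Jd k k * sidev bs j k) 7,
   lmul (lmul (lmul (kl j) (Kl bs)) (Rl j)) (Kl bs), hl bs j).
Definition sdata := Eval vm_compute in map mkdata sides.
Definition Rtab := Eval vm_compute in map Rl js.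
Definition Rl' j := nth [::] Rtab (j - 7).
Definition hl' bs j := lmul (lmul (lmul (Kl bs) (Rl' j)) (Kl bs)) (kl j).
Definition col6 (g : seq (seq int)) := map (fun r => nth 0 r 6) g.
Definition dot (a b : seq int) := foldr (fun p acc => p.1 * p.2 + acc) 0 (zip a b).

Fixpoint redH' (n : nat) (g : seq (seq int)) : bool :=
  if n is n'.+1 then
    let c := col6 g in
    match [seq d <- sdata | 0 < dot c d.1.1.2] with
    | [::] => g == Il
    | d :: _ =>
       let g' := lmul d.1.2 g in
       (lmul d.2 g' == g) && redH' n' g'
    end
  else g == Il.

Definition lm (l : seq (seq int)) : 'M[int]_7 := \matrix_(i < 7, j < 7) nth 0 (nth [::] l i) j.

Lemma lmE l (i j : 'I_7) : lm l i j = ent l i j.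
Proof. by rewrite mxE. Qed.

Lemma ent_mk f i j : (i < 7)%N -> (j < 7)%N -> ent (mk f) i j = f i j.
Proof. by move=> hi hj; rewrite /ent /mk nth_mkseq // nth_mkseq. Qed.

Lemma sum7 (F : nat -> int) : \sum_(k < 7) F k = lsum F.
Proof.
rewrite -(big_mkord xpredT F) /index_iota subn0 /lsum.
by rewrite /= !big_cons big_nil.
Qed.

Lemma lmulE a b : lm (lmul a b) = lm a * lm b.
Proof.
apply/matrixP=> i j; rewrite lmE /lmul ent_mk // !mxE.
rewrite -sum7; apply: eq_bigr => k _; by rewrite !mxE.
Qed.

Lemma IlE : lm Il = 1.
Proof. by apply/matrixP=> i j; rewrite lmE ent_mk // !mxE. Qed.

Lemma AmatE : Amat = lm Al.
Proof. by []. Qed.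

Definition bsof (s : {ffun 'I_6 -> bool}) : seq bool := mkseq (fun i => s (inord i)) 6.

Lemma KofE s : Kof s = lm (Kl (bsof s)).
Proof.
apply/matrixP=> i j; rewrite lmE /Kl /Kll ent_mk // mxE.
case: (i < 6)%N / idP => [hi|] //=.
by rewrite /bsof nth_mkseq.
Qed.

Lemma bsofK bs : size bs = 6%N -> bsof [ffun i : 'I_6 => nth false bs i] = bs.
Proof.
move=> hs; apply: (@eq_from_nth _ false); first by rewrite size_mkseq hs.
move=> i; rewrite size_mkseq => hi; rewrite nth_mkseq // ffunE inordK //.
Qed.

Lemma KmatE N : Kmat N = lm (Kll (fun i => i.+1 \in N)).
Proof. by apply/matrixP=> i j; rewrite lmE /Kll ent_mk // mxE. Qed.

Lemma kmatE j : kmat j = lm (kl j).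
Proof. exact: KmatE. Qed.

Lemma JmatE (m k : 'I_7) : Jmat m k = Jd m k.
Proof. by rewrite mxE. Qed.

Lemma uE j : (7 <= j <= 27)%N -> u j = \col_(k < 7) nth 0 (ul j) k.
Proof.
case/andP=> h1 h2; apply/matrixP=> k z; rewrite (ord1 z) !mxE /u /ul.
have -> : (1 <= j <= 6)%N = false by apply/negP => /andP [_ h]; have := leq_trans h1 h.
rewrite h1 /=; case: (leqP j 21) => h3.
  by rewrite nth_mkseq // !mxE.
rewrite ifT; last by rewrite h2 andbT.
rewrite nth_mkseq // !mxE summxE.
congr (_ - _ + _).
under eq_bigr do rewrite mxE.
case: k => [[|[|[|[|[|[|[|k]]]]]]] hk] //=;
  by do 6!rewrite big_ltn //; rewrite big_geq // ?addr0 ?add0r.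
Qed.

Lemma RE j : (7 <= j <= 27)%N -> R j = lm (Rl j).
Proof.
move=> hj; rewrite /R (uE hj); apply/matrixP=> i k.
rewrite lmE /Rl ent_mk // !mxE big_ord1 !mxE.
congr (_ - _ * (_ * _)).
rewrite -sum7; apply: eq_bigr => m _; rewrite !mxE //.
Qed.

Lemma genMM S a b : gen S a -> gen S b -> gen S (a * b).
Proof.
move=> ha; elim=> [|g s _ IH Ss|g s _ IH Ss]; first by rewrite mulr1.
  by rewrite mulrA; apply: genM.
by rewrite mulrA; apply: genV.
Qed.

Lemma gen_in S s : S s -> gen S s.
Proof. by move=> Ss; rewrite -(mul1r s); apply: genM => //; apply: gen1. Qed.

Lemma gen_inV S s : S s -> gen S s^-1.
Proof. by move=> Ss; rewrite -(mul1r s^-1); apply: genV => //; apply: gen1. Qed.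

Lemma gen_unit S : (forall s, S s -> s \is a GRing.unit) ->
  forall a, gen S a -> a \is a GRing.unit.
Proof.
move=> hS a; elim=> [|g s _ IH Ss|g s _ IH Ss]; first exact: unitr1.
  by rewrite unitrMr // hS.
by rewrite unitrMr ?unitrV // hS.
Qed.

Lemma genVV S : (forall s, S s -> s \is a GRing.unit) ->
  forall a, gen S a -> gen S a^-1.
Proof.
move=> hS a; elim=> [|g s hg IH Ss|g s hg IH Ss]; first by rewrite invr1; apply: gen1.
  have us := hS _ Ss; have ug := gen_unit hS hg.
  rewrite invrM //; apply: genMM; [exact: gen_inV|exact: IH].
have us := hS _ Ss; have ug := gen_unit hS hg.
rewrite invrM ?unitrV // invrK; apply: genMM; [exact: gen_in|exact: IH].
Qed.

Definition Ev (M : mat7) := exists X : mat7, M = 1 + X *+ 2.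

Lemma EvM M N : Ev M -> Ev N -> Ev (M * N).
Proof.
move=> [X ->] [Y ->]; exists (X + Y + (X * Y) *+ 2).
rewrite mulrDl mulrDr !mul1r mulrDr mulr1 (mulrnAl X (Y *+ 2) 2) (mulrnAr (X) Y 2).
rewrite !mulrnDl -addrA; congr (1 + _); by rewrite addrCA addrA.
Qed.

Lemma EvV M : M \is a GRing.unit -> Ev M -> Ev M^-1.
Proof.
move=> hu [X hX]; exists (- (X * M^-1)).
have : M * M^-1 = 1 by rewrite mulrV.
rewrite {1}hX mulrDl mul1r (mulrnAl X M^-1 2) => h.
by rewrite mulNrn -h addrK.
Qed.

Lemma gen_Ev S : (forall s, S s -> s \is a GRing.unit) -> (forall s, S s -> Ev s) ->
  forall a, gen S a -> Ev a.
Proof.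
move=> hU hE a; elim=> [|g s _ IH Ss|g s _ IH Ss].
- by exists 0; rewrite mul0rn addr0.
- exact: EvM IH (hE _ Ss).
- exact: EvM IH (EvV (hU _ Ss) (hE _ Ss)).
Qed.

Lemma Rtab_ok : all (fun j => Rl' j == Rl j) js.
Proof. Time by vm_compute. Qed.

Lemma injs j : (7 <= j <= 27)%N -> j \in js.
Proof. by move=> h; rewrite /js mem_iota. Qed.

Lemma injs' j : j \in js -> (7 <= j <= 27)%N.
Proof. by rewrite /js mem_iota. Qed.

Lemma hl_gen bs j : size bs = 6%N -> (7 <= j <= 27)%N -> Hgens (lm (hl' bs j)).
Proof.
move=> hs hj; exists [ffun i : 'I_6 => nth false bs i], j; split => //.
rewrite /hl'.
have -> : Rl' j = Rl j by apply/eqP; move/allP: Rtab_ok; apply; exact: injs.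
by rewrite !lmulE KofE bsofK // RE // kmatE.
Qed.

Lemma sdata_ok : all (fun d => (size d.1.1.1.1 == 6%N) && (d.1.1.1.2 \in js) && (d.2 == hl' d.1.1.1.1 d.1.1.1.2)) sdata.
Proof. Time by vm_compute. Qed.

Definition pickd g := [seq d <- sdata | 0 < dot (col6 g) d.1.1.2].
Lemma redH_S n g : redH' n.+1 g =
  match pickd g with
  | [::] => g == Il
  | d :: _ => (lmul d.2 (lmul d.1.2 g) == g) && redH' n (lmul d.1.2 g)
  end.
Proof. rewrite /pickd /redH' -/redH'. by []. Qed.

Lemma redH_sound n g : redH' n g -> Hgrp (lm g).
Proof.
elim: n g => [|n IH] g; first by move/eqP => ->; rewrite IlE; apply: gen1.
rewrite redH_S.
case E: (pickd g) => [|d ds]; first by move/eqP => ->; rewrite IlE; apply: gen1.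
case/andP => /eqP e hr.
have dm : d \in sdata by have := mem_head d ds; rewrite -E mem_filter => /andP [].
move/allP: sdata_ok => /(_ d dm) /andP [/andP [/eqP hs hj] /eqP hH].
rewrite -e lmulE; apply: genMM; last exact: IH.
by apply: gen_in; rewrite hH; apply: hl_gen => //; exact: injs'.
Qed.

Definition hinvl bs j := lmul (lmul (lmul (kl j) (Kl bs)) (Rl' j)) (Kl bs).
Definition evl (l : seq (seq int)) :=
  all (fun i => all (fun j => (2 %| ent l i j - (i == j)%:R)%Z) (iota 0 7)) (iota 0 7).
Definition Apow r := iter r (lmul Al) Il.

Lemma big_check : all (fun bs => all (fun j =>
   (lmul (hl' bs j) (hinvl bs j) == Il) && evl (hl' bs j) &&
   redH' 10 (lmul (lmul Al (hl' bs j)) Ail)) js) (allbs 6).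
Proof. Time by vm_compute. Qed.

Lemma small_check : (lmul Al Ail == Il) && redH' 10 (Apow 8) &&
  all (fun r => ~~ evl (Apow r)) (iota 1 7).
Proof. Time by vm_compute. Qed.

Lemma bsof_mem s : bsof s \in allbs 6.
Proof.
rewrite /bsof /mkseq /=.
by case: (s (inord 0)); case: (s (inord 1)); case: (s (inord 2));
   case: (s (inord 3)); case: (s (inord 4)); case: (s (inord 5)).
Qed.

Lemma Hgens_ex h : Hgens h ->
  exists bs j, [/\ bs \in allbs 6, j \in js & h = lm (hl' bs j)].
Proof.
case=> s [j [hj ->]]; exists (bsof s), j; split; [exact: bsof_mem|exact: injs|].
rewrite /hl'.
have -> : Rl' j = Rl j by apply/eqP; move/allP: Rtab_ok; apply; exact: injs.
by rewrite !lmulE KofE RE // kmatE.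
Qed.

Lemma gen_facts bs j : bs \in allbs 6 -> j \in js ->
  [/\ lm (hl' bs j) * lm (hinvl bs j) = 1, evl (hl' bs j) &
      redH' 10 (lmul (lmul Al (hl' bs j)) Ail)].
Proof.
move=> hb hj; move/allP: big_check => /(_ bs hb) /allP /(_ j hj).
by case/andP => /andP [/eqP e ev] rd; split => //; rewrite -lmulE e IlE.
Qed.

Lemma unit_of (A B : mat7) : A * B = 1 -> A \is a GRing.unit.
Proof. by move=> h; case: (@mulmx1_unit _ _ A B h). Qed.

Lemma Hgens_unit h : Hgens h -> h \is a GRing.unit.
Proof.
case/Hgens_ex => bs [j [hb hj ->]]; case: (gen_facts hb hj) => e _ _.
exact: unit_of e.
Qed.

Lemma H_unit h : Hgrp h -> h \is a GRing.unit.
Proof. move=> hh; exact: (@gen_unit Hgens Hgens_unit h hh). Qed.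

Lemma HM a b : Hgrp a -> Hgrp b -> Hgrp (a * b).
Proof. exact: genMM. Qed.

Lemma HV a : Hgrp a -> Hgrp a^-1.
Proof. move=> ha; exact: (@genVV Hgens Hgens_unit a ha). Qed.


Lemma evlP l : evl l -> Ev (lm l).
Proof.
move=> h; exists (\matrix_(i < 7, j < 7) ((ent l i j - (i == j)%:R) %/ 2)%Z).
apply/matrixP=> i j; rewrite !mxE.
have hi : (nat_of_ord i) \in iota 0 7 by rewrite mem_iota add0n ltn_ord.
have hj : (nat_of_ord j) \in iota 0 7 by rewrite mem_iota add0n ltn_ord.
have hd := allP (allP h _ hi) _ hj.
have hd2 : (2 %| ent l i j - ((i : 'I_7) == j)%:R)%Z := hd.
rewrite -mulr2n.
have -> : ((ent l i j - ((i : 'I_7) == j)%:R) %/ 2)%Z *+ 2 = ent l i j - (i == j)%:R.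
  move: (divzK hd2) => e; rewrite -[RHS]e mulr_natr //.
by rewrite addrC subrK.
Qed.

Lemma Ev_evl l : Ev (lm l) -> evl l.
Proof.
case=> X hX; apply/allP => i; rewrite mem_iota add0n => /andP [_ hi].
apply/allP => j; rewrite mem_iota add0n => /andP [_ hj].
have := congr1 (fun M : mat7 => M (Ordinal hi) (Ordinal hj)) hX.
rewrite /= !mxE /= => e; rewrite /ent e (_ : (Ordinal hi == Ordinal hj) = (i == j)) // addrAC subrr add0r -mulr2n -[X _ _ *+ 2]mulr_natr.
by apply: dvdz_mull.
Qed.

Lemma Hgens_Ev h : Hgens h -> Ev h.
Proof.
case/Hgens_ex => bs [j [hb hj ->]]; case: (gen_facts hb hj) => _ ev _.
exact: evlP.
Qed.

Lemma H_Ev h : Hgrp h -> Ev h.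
Proof. move=> hh; exact: (@gen_Ev Hgens Hgens_unit Hgens_Ev h hh). Qed.

Lemma small_facts : [/\ Amat * lm Ail = 1, redH' 10 (Apow 8) &
  forall r, (0 < r < 8)%N -> ~~ evl (Apow r)].
Proof.
case/andP: small_check => /andP [/eqP e1 h2] h3; split.
- by rewrite AmatE -lmulE e1 IlE.
- exact: h2.
move=> r hr; apply: (allP h3); rewrite mem_iota; case/andP: hr => h4 h5.
by rewrite h4 add1n h5.
Qed.

Lemma A_unit : Amat \is a GRing.unit.
Proof. by case: small_facts => e _ _; apply: unit_of e. Qed.

Lemma AinvE : Amat^-1 = lm Ail.
Proof.
case: small_facts => e _ _.
by rewrite -[RHS](mulKr A_unit) e mulr1.
Qed.

Lemma ApowE r : Amat ^+ r = lm (Apow r).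
Proof.
elim: r => [|r IH]; first by rewrite expr0 IlE.
by rewrite exprS IH (_ : Apow r.+1 = lmul Al (Apow r)) // lmulE -AmatE.
Qed.

Lemma conjM (u g s : mat7) : u \is a GRing.unit ->
  u * (g * s) * u^-1 = (u * g * u^-1) * (u * s * u^-1).
Proof. by move=> hu; rewrite !mulrA mulrVK. Qed.

Lemma conjV (u s : mat7) : u \is a GRing.unit -> s \is a GRing.unit ->
  u * s^-1 * u^-1 = (u * s * u^-1)^-1.
Proof.
move=> hu hs; rewrite !invrM ?unitrMl ?unitrV ?invrK ?mulrA //.
Qed.

Lemma conjA_gen s : Hgens s -> Hgrp (Amat * s * Amat^-1).
Proof.
case/Hgens_ex => bs [j [hb hj ->]]; case: (gen_facts hb hj) => _ _ rd.
by rewrite AinvE AmatE -!lmulE; apply: redH_sound rd.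
Qed.

Lemma conjA h : Hgrp h -> Hgrp (Amat * h * Amat^-1).
Proof.
elim=> [|g s hg IH Ss|g s hg IH Ss].
- by rewrite mulr1 mulrV ?A_unit //; apply: gen1.
- by rewrite conjM ?A_unit //; apply: HM IH (conjA_gen Ss).
- rewrite conjM ?A_unit // conjV ?A_unit ?Hgens_unit //.
  by apply: HM IH (HV (conjA_gen Ss)).
Qed.

Lemma A8 : Hgrp (Amat ^+ 8).
Proof. by case: small_facts => _ h _; rewrite ApowE; apply: redH_sound h. Qed.

Lemma AX_unit n : Amat ^+ n \is a GRing.unit.
Proof. exact: unitrX A_unit. Qed.

Lemma conjAn n h : Hgrp h -> Hgrp (Amat ^+ n * h * (Amat ^+ n)^-1).
Proof.
move=> hh; elim: n => [|n IH]; first by rewrite expr0 invr1 mul1r mulr1.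
rewrite exprS invrM ?AX_unit ?A_unit //.
have -> : Amat * Amat ^+ n * h * ((Amat ^+ n)^-1 * Amat^-1) =
          Amat * (Amat ^+ n * h * (Amat ^+ n)^-1) * Amat^-1 by rewrite !mulrA.
exact: conjA.
Qed.

Lemma conj2 (R : unitRingType) (u v h : R) : u \is a GRing.unit -> v \is a GRing.unit ->
  v * ((v^-1 * u^-1) * h * (u * v)) * v^-1 = u^-1 * h * u.
Proof. by move=> hu hv; rewrite !mulrA mulrV // mul1r mulrK. Qed.

Lemma conjAinv h : Hgrp h -> Hgrp (Amat^-1 * h * Amat).
Proof.
move=> hh.
have e : Amat^-1 * h * Amat =
  Amat ^+ 7 * (((Amat ^+ 8)^-1 * h) * Amat ^+ 8) * (Amat ^+ 7)^-1.
  by rewrite (exprS Amat 7) invrM ?A_unit ?AX_unit // conj2 ?A_unit ?AX_unit.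
rewrite e; apply: conjAn; apply: HM; last exact: A8.
by apply: HM => //; apply: HV; exact: A8.
Qed.

Definition Cl (g : mat7) := g \is a GRing.unit /\
  forall h, Hgrp h -> Hgrp (g * h * g^-1) /\ Hgrp (g^-1 * h * g).

Lemma ClM g s : Cl g -> Cl s -> Cl (g * s).
Proof.
move=> [ug hg] [us hs]; split; first by rewrite unitrMl.
move=> h hh; rewrite invrM //; split.
  have -> : g * s * h * (s^-1 * g^-1) = g * (s * h * s^-1) * g^-1 by rewrite !mulrA.
  by apply: (proj1 (hg _ _)); apply: (proj1 (hs _ hh)).
have -> : s^-1 * g^-1 * h * (g * s) = s^-1 * (g^-1 * h * g) * s by rewrite !mulrA.
by apply: (proj2 (hs _ _)); apply: (proj2 (hg _ hh)).
Qed.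

Lemma ClV g : Cl g -> Cl g^-1.
Proof.
move=> [ug hg]; split; first by rewrite unitrV.
by move=> h hh; rewrite invrK; case: (hg _ hh).
Qed.

Lemma ClA : Cl Amat.
Proof. by split; [exact: A_unit| move=> h hh; split; [exact: conjA|exact: conjAinv]]. Qed.

Lemma ClH s : Hgrp s -> Cl s.
Proof.
move=> hs; split; first exact: H_unit.
by move=> h hh; split; apply: HM; try apply: HM => //; try exact: HV.
Qed.

Lemma Gamma_Cl M : Gamma M -> Cl M.
Proof.
elim=> [|g s _ IH Ss|g s _ IH Ss].
- split; first exact: unitr1.
  by move=> h hh; rewrite invr1 mul1r mulr1.
- by apply: ClM IH _; case: Ss => [->|hs]; [exact: ClA|exact: ClH].
- by apply: ClM IH (ClV _); case: Ss => [->|hs]; [exact: ClA|exact: ClH].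
Qed.

Lemma shiftH (g s B : mat7) : B \is a GRing.unit ->
  g * s * B^-1 = (g * B^-1) * (B * s * B^-1).
Proof. by move=> hB; rewrite !mulrA mulrVK. Qed.

Lemma part2 M : Gamma M -> exists k : nat, Hgrp (M * (Amat ^+ k)^-1).
Proof.
elim=> [|g s _ [k IH] Ss|g s _ [k IH] Ss].
- by exists 0%N; rewrite expr0 invr1 mulr1; apply: gen1.
- case: Ss => [->|hs].
    exists k.+1; rewrite exprSr invrM ?A_unit ?AX_unit // mulrA mulrK ?A_unit //.
  exists k; rewrite shiftH ?AX_unit //; apply: HM IH _; exact: conjAn.
- case: Ss => [->|hs].
    exists (k + 7)%N; rewrite -mulrA.
    have -> : Amat^-1 * (Amat ^+ (k + 7))^-1 = (Amat ^+ k)^-1 * (Amat ^+ 8)^-1.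
      rewrite -!invrM ?A_unit ?AX_unit //; congr (_^-1).
      by rewrite -exprSr -exprD addnS addSn addnC.
    rewrite mulrA; apply: HM IH (HV A8).
  exists k; rewrite shiftH ?AX_unit //; apply: HM IH _; apply: conjAn; exact: HV.
Qed.

Lemma HX (a : mat7) n : Hgrp a -> Hgrp (a ^+ n).
Proof.
move=> ha; elim: n => [|n IH]; first by rewrite expr0; apply: gen1.
by rewrite exprS; apply: HM.
Qed.

Lemma part3 k : Hgrp (Amat ^+ k) <-> (8 %| k)%N.
Proof.
split; last first.
  move/dvdnP => [q ->]; rewrite mulnC exprM; exact: HX A8.
move=> hk.
have hr : Hgrp (Amat ^+ (k %% 8)).
  have e : Amat ^+ k = Amat ^+ (k %/ 8 * 8) * Amat ^+ (k %% 8) by rewrite -exprD -divn_eq.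
  have u : Amat ^+ (k %/ 8 * 8) \is a GRing.unit by exact: AX_unit.
  have -> : Amat ^+ (k %% 8) = (Amat ^+ (k %/ 8 * 8))^-1 * Amat ^+ k by rewrite e mulKr.
  apply: HM hk; apply: HV; rewrite mulnC exprM; exact: HX A8.
case: small_facts => _ _ hn.
move: (ltn_pmod k (isT : (0 < 8)%N)); rewrite /dvdn.
case E: (k %% 8)%N => [|r] // hlt.
exfalso; move: (hn r.+1 (hlt)) => /negP; apply.
by apply: Ev_evl; rewrite -ApowE -E; apply: H_Ev.
Qed.

Theorem lemma8p5 :
  normal_in Hgrp Gamma /\ quotient_cyclic_gen Gamma Hgrp Amat 8.
Proof.
split.
  by move=> g h hg hh; case: (Gamma_Cl hg) => _ /(_ h hh) [].
split; first exact: part2.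
exact: part3.
Qed.
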